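(* Let $n\ge4$ and let $W_n$ be the wheel graph on $n$ vertices with oriented incidence matrix \[N=\left[\begin{array}{c|c} \mathbf{1}^T & \mathbf{0}^T \\ \hline -I_{n-1} & C \end{array}\right],\] where $C$ is the circulant matrix $\mathrm{circ}(1,0,\ldots,0,-1)$ of order $n-1$. Then $CC^T+I_{n-1}$ is invertible and the Moore–Penrose inverse of $N$ is \[N^+=\frac{1}{n} \left[\begin{array}{r|c} \mathbf{1} & X \\ \hline \mathbf{0} & Y \end{array}\right],\] where $X=(CC^T+I_{n-1})^{-1}(J_{n-1}-nI_{n-1})$ and $Y=-C^TX$.
   Context: The wheel graph $W_n$ ($n\ge4$) is a cycle on $n-1$ vertices together with a hub vertex adjacent to every cycle vertex. An oriented incidence matrix of a graph is obtained from the (0/1 vertex-edge) incidence matrix by changing one of the two $1$'s in each column to $-1$; the displayed block form corresponds to listing the hub first, then the cycle vertices in cyclic order, with the $n-1$ spokes (oriented away from the hub) listed first followed by the cycle edges. For $c_0,\dots,c_{k-1}$, $\mathrm{circ}(c_0,\ldots,c_{k-1})$ denotes the $k\times k$ circulant matrix whose $(i,j)$-entry is $c_{(j-i)\bmod k}$. $\mathbf 1$ is the all-ones column vector of length $n-1$, $\mathbf 0$ the zero vector, $J_{n-1}$ the $(n-1)\times(n-1)$ all-ones matrix, $I_{n-1}$ the identity. The Moore–Penrose inverse $A^+$ of a real matrix $A$ is the unique matrix with $AA^+A=A$, $A^+AA^+=A^+$, $(AA^+)^T=AA^+$, $(A^+A)^T=A^+A$. *)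

(* Defs.v *)
From mathcomp Require Import all_boot all_order all_algebra.
Set Implicit Arguments. Unset Strict Implicit. Unset Printing Implicit Defensive.
Import Order.TTheory GRing.Theory Num.Theory.
Local Open Scope ring_scope.

Definition circ (R : ringType) (k : nat) (c : nat -> R) : 'M[R]_k :=
  \matrix_(i < k, j < k) c ((j + k - i) %% k)%N.

Definition wheel_circ_coef (R : ringType) (k : nat) (t : nat) : R :=
  if t == 0%N then 1 else if t == k.-1 then -1 else 0.

Definition is_moore_penrose (R : ringType) (m p : nat)
  (A : 'M[R]_(m, p)) (B : 'M[R]_(p, m)) : Prop :=
  [/\ A *m B *m A = A,
      B *m A *m B = B,
      (A *m B)^T = A *m B &
      (B *m A)^T = B *m A].

(* Main.v *)
Require Import Defs.
From mathcomp Require Import all_boot all_order all_algebra.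
From mathcomp Require Import zify.
Import Order.TTheory GRing.Theory Num.Theory.
Local Open Scope ring_scope.

Lemma circ_idx k (i j : 'I_k) :
  ((j + k - i) %% k = if (i <= j)%N then j - i else j + k - i)%N.
Proof.
have hi := ltn_ord i; have hj := ltn_ord j.
case: leqP => h.
  have ->: (j + k - i = (j - i) + k)%N by lia.
  by rewrite modnDr modn_small //; lia.
by rewrite modn_small //; lia.
Qed.

Lemma sum_circ_j (R : ringType) m (i : 'I_m.+1) (F : nat -> R) :
  \sum_(j < m.+1) F ((j + m.+1 - i) %% m.+1)%N = \sum_(t < m.+1) F t.
Proof.
pose h (j : 'I_m.+1) : 'I_m.+1 := inord ((j + m.+1 - i) %% m.+1).
have hinj : injective h.
  move=> a b /(congr1 (@nat_of_ord _)); rewrite /h !inordK ?ltn_mod // !circ_idx => e.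
  apply/ord_inj; have := ltn_ord a; have := ltn_ord b; have := ltn_ord i.
  move: e; case: (leqP i a); case: (leqP i b); lia.
symmetry; rewrite (reindex_inj hinj) /=; apply: eq_bigr => j _.
by rewrite /h inordK ?ltn_mod.
Qed.

Lemma sum_circ_i (R : ringType) m (j : 'I_m.+1) (F : nat -> R) :
  \sum_(i < m.+1) F ((j + m.+1 - i) %% m.+1)%N = \sum_(t < m.+1) F t.
Proof.
pose h (i : 'I_m.+1) : 'I_m.+1 := inord ((j + m.+1 - i) %% m.+1).
have hinj : injective h.
  move=> a b /(congr1 (@nat_of_ord _)); rewrite /h !inordK ?ltn_mod // !circ_idx => e.
  apply/ord_inj; have := ltn_ord a; have := ltn_ord b; have := ltn_ord j.
  move: e; case: (leqP a j); case: (leqP b j); lia.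
symmetry; rewrite (reindex_inj hinj) /=; apply: eq_bigr => i _.
by rewrite /h inordK ?ltn_mod.
Qed.

Lemma sum_coef (R : ringType) m :
  \sum_(t < m.+2) wheel_circ_coef R m.+2 t = 0.
Proof.
rewrite big_ord_recl big_ord_recr /= big1 ?add0r.
  by rewrite /wheel_circ_coef /= eqxx addrN.
move=> t _; rewrite /wheel_circ_coef /=.
case: eqP => // e; have := ltn_ord t; move: e; rewrite /bump /=; lia.
Qed.

Lemma circ_u (R : ringType) m :
  circ m.+2 (wheel_circ_coef R m.+2) *m (const_mx 1 : 'cV_(m.+2)) = 0.
Proof.
apply/matrixP => i k; rewrite !mxE.
under eq_bigr do rewrite !mxE mulr1.
by rewrite sum_circ_j sum_coef.
Qed.

Lemma u_circ (R : ringType) m :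
  (const_mx 1 : 'rV_(m.+2)) *m circ m.+2 (wheel_circ_coef R m.+2) = 0.
Proof.
apply/matrixP => k j; rewrite !mxE.
under eq_bigr do rewrite !mxE mul1r.
by rewrite sum_circ_i sum_coef.
Qed.

Lemma zm (V : zmodType) (a b c : V) : -a - b - (-a - c - b) = c.
Proof. by rewrite !opprB addrC !addrA subrK addrC addrA addNr add0r. Qed.

Lemma key (R : fieldType) k (C Mi X Y J0 : 'M[R]_k) (u : 'cV[R]_k) (ut : 'rV[R]_k) (nr : R) :
  ut = u^T -> J0 = u *m u^T ->
  (C *m C^T + 1%:M) *m Mi = 1%:M -> Mi^T = Mi ->
  C *m u = 0 -> u^T *m C = 0 -> u^T *m u = (nr - 1)%:M -> nr != 0 ->
  X = Mi *m (J0 - nr *: 1%:M) -> Y = - (C^T *m X) ->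
  is_moore_penrose (block_mx ut 0 (-1%:M) C) (nr^-1 *: block_mx u X 0 Y).
Proof.
move=> -> -> .
set M := C *m C^T + 1%:M => MMi Mit Cu uC uu nr0 Xe0 Ye.
have aux m p (A B : 'M[R]_(m,p)) : A = nr *: B -> nr^-1 *: A = B.
  by move=> ->; rewrite scalerA mulVf // scale1r.
have Ctu : C^T *m u = 0 by rewrite -(trmxK u) -trmx_mul uC trmx0.
have Mt : M^T = M by rewrite /M linearD /= trmx_mul trmxK trmx1.
have MiM : Mi *m M = 1%:M by rewrite -Mit -Mt -trmx_mul MMi trmx1.
have Mu : M *m u = u by rewrite /M mulmxDl -mulmxA Ctu mulmx0 add0r mul1mx.
have Miu : Mi *m u = u by rewrite -{1}Mu mulmxA MiM mul1mx.
have uMi : u^T *m Mi = u^T by rewrite -Mit -trmx_mul Miu.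
have Xe : X = u *m u^T - nr *: Mi.
  by rewrite Xe0 mulmxBr mulmxA Miu -scalemxAr mulmx1.
set J := u *m u^T.
have Jt : J^T = J by rewrite /J trmx_mul trmxK.
have Xt : X^T = X by rewrite Xe linearB /= Jt linearZ /= Mit.
have utX : u^T *m X = - u^T.
  rewrite Xe mulmxBr /J mulmxA uu mul_scalar_mx -scalemxAr uMi.
  by rewrite scalerBl scale1r addrAC subrr add0r.
have Xu : X *m u = - u by rewrite -Xt -[u]trmxK -trmx_mul trmxK utX linearN /= trmxK.
have MJ : M *m J = J by rewrite /J mulmxA Mu.
have MX : M *m X = J - nr%:M.
  by rewrite Xe mulmxBr MJ -scalemxAr MMi scalemx1.
have XM : X *m M = J - nr%:M.
  by rewrite -Xt -Mt -trmx_mul MX linearB /= Jt tr_scalar_mx.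
have CJ : C *m J = 0 by rewrite /J mulmxA Cu mul0mx.
have JC : J *m C = 0 by rewrite /J -mulmxA uC mulmx0.
have CY : - X + C *m Y = nr%:M - J.
  rewrite Ye mulmxN mulmxA -opprD -{1}[X]mul1mx -mulmxDl addrC -/M MX.
  by rewrite opprB.
have JX : J *m X = - J by rewrite /J -mulmxA utX mulmxN.
have XJ : X *m J = - J by rewrite /J mulmxA Xu mulNmx.
have NB : block_mx u^T 0 (-1%:M) C *m block_mx u X 0 Y =
          block_mx (u^T *m u) (- u^T) (- u) (nr%:M - J).
  rewrite mulmx_block !(mul0mx, mulmx0, addr0, add0r, mulNmx, mul1mx).
  by rewrite utX CY.
have BN : block_mx u X 0 Y *m block_mx u^T 0 (-1%:M) C =
          block_mx (J - X) (X *m C) (- Y) (Y *m C).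
  by rewrite mulmx_block !(mul0mx, mulmx0, addr0, add0r, mulmxN, mulmx1).
split.
- rewrite -scalemxAr -scalemxAl NB mulmx_block; apply: aux.
  rewrite scale_block_mx; congr block_mx;
    rewrite !(mul0mx, mulmx0, addr0, add0r, mulmxN, mulNmx, mul1mx, mulmx1, opprK).
  + by rewrite uu mul_scalar_mx scalerBl scale1r subrK.
  + by rewrite uC oppr0 scaler0.
  + by rewrite -/J opprB addKr scalerN scalemx1.
  + by rewrite mulmxBl JC subr0 mul_scalar_mx.
- rewrite -scalemxAl -scalemxAr -scalemxAl BN mulmx_block; congr (nr^-1 *: _); apply: aux.
  rewrite scale_block_mx; congr block_mx;
    rewrite ?(mul0mx, mulmx0, addr0, add0r, mulmxN, mulNmx, mul1mx, mulmx1, opprK).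
  + by rewrite mulmxBl Xu opprK /J -mulmxA uu mul_mx_scalar scalerBl scale1r subrK.
  + have e : X *m C *m (C^T *m X) = X *m (M *m X) - X *m X.
      by rewrite /M mulmxDl mul1mx mulmxDr addrK !mulmxA.
    by rewrite Ye mulmxN e MX mulmxBl JX mulmxBr XJ mul_mx_scalar zm.
  + by rewrite Ye mulNmx opprK -mulmxA Xu mulmxN Ctu oppr0 scaler0.
  + have YJ : Y *m J = 0.
      by rewrite Ye mulNmx -mulmxA XJ mulmxN /J mulmxA Ctu mul0mx !oppr0.
    by rewrite -mulmxA -mulmxN -mulmxDr CY mulmxBr YJ subr0 mul_mx_scalar.
- rewrite -scalemxAr NB linearZ /= tr_block_mx; congr (_ *: _); congr block_mx.
  + by rewrite uu tr_scalar_mx.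
  + by rewrite linearN.
  + by rewrite linearN /= trmxK.
  + by rewrite linearB /= tr_scalar_mx Jt.
- rewrite -scalemxAl BN linearZ /= tr_block_mx; congr (_ *: _); congr block_mx.
  + by rewrite linearB /= Jt Xt.
  + by rewrite Ye opprK trmx_mul Xt trmxK.
  + by rewrite Ye opprK trmx_mul Xt.
  + by rewrite Ye mulNmx linearN /= !trmx_mul trmxK Xt mulmxA.
Qed.

Lemma M_unit (R : realFieldType) k (C : 'M[R]_k) : C *m C^T + 1%:M \in unitmx.
Proof.
rewrite unitmxE unitfE; apply/negP => /det0P [v vn0 vM].
have h : v *m (C *m C^T + 1%:M) *m v^T = 0 by rewrite vM mul0mx.
rewrite mulmxDr mulmx1 mulmxDl mulmxA -[v *m C *m C^T *m v^T]mulmxA -trmx_mul in h.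
have sq (w : 'rV[R]_k) : (w *m w^T) 0 0 = \sum_i w 0 i ^+ 2.
  by rewrite mxE; apply: eq_bigr => i _; rewrite mxE expr2.
have ge (w : 'rV[R]_k) : 0 <= \sum_i w 0 i ^+ 2 by apply: sumr_ge0 => i _; exact: sqr_ge0.
have /eqP := congr1 (fun A : 'M[R]_1 => A 0 0) h.
rewrite mxE sq sq mxE paddr_eq0 // => /andP [_ /eqP /psumr_eq0P H].
move/eqP: vn0; apply; apply/matrixP => i j; rewrite ord1 mxE.
apply/eqP; rewrite -sqrf_eq0; apply/eqP; apply: H => // j' _; exact: sqr_ge0.
Qed.

Theorem mainTheorem6 (R : realFieldType) (n : nat) (hn : (4 <= n)%N) :
  let C : 'M[R]_(n.-1) := circ n.-1 (wheel_circ_coef R n.-1) in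
  let N : 'M[R]_(1 + n.-1, n.-1 + n.-1) :=
    block_mx (const_mx 1) 0 (- 1%:M) C in
  let X : 'M[R]_(n.-1) :=
    invmx (C *m C^T + 1%:M) *m (const_mx 1 - n%:R *: 1%:M) in
  let Y : 'M[R]_(n.-1) := - (C^T *m X) in
  let Nplus : 'M[R]_(n.-1 + n.-1, 1 + n.-1) :=
    (n%:R)^-1 *: block_mx (const_mx 1) X 0 Y in
  (C *m C^T + 1%:M) \in unitmx /\ is_moore_penrose N Nplus.
Proof.
case: n hn => [|[|[|[|m]]]] // _.
move=> C N X Y Nplus.
have hU : C *m C^T + 1%:M \in unitmx by exact: M_unit.
split => //.
have ut : (const_mx 1 : 'rV[R]_(m.+3)) = (const_mx 1 : 'cV[R]_(m.+3))^T by rewrite trmx_const.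
apply: (@key R m.+3 C (invmx (C *m C^T + 1%:M)) X Y (const_mx 1) (const_mx 1) _ (m.+4)%:R ut).
- by apply/matrixP => i j; rewrite !mxE big_ord1 !mxE mulr1.
- exact: mulmxV.
- rewrite trmx_inv; congr invmx.
  by rewrite linearD /= trmx_mul trmxK trmx1.
- exact: circ_u.
- rewrite -ut; exact: u_circ.
- apply/matrixP => i j; rewrite !mxE !ord1 eqxx mulr1n.
  under eq_bigr do rewrite !mxE mulr1.
  rewrite sumr_const card_ord.
  by rewrite [in RHS]mulrS addrC addrK.
- by rewrite pnatr_eq0.
- by [].
- by [].
Qed.
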